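(* Let $m$ and $n$ be positive integers such that $1<m\le n$. Then \[ \sum_{d=1}^n \mu(d)\, 2^{\lfloor\frac{n}{d} \rfloor - \lfloor \frac{n-1}{d} \rfloor + \lfloor\frac{m}{d} \rfloor - \lfloor \frac{m-1}{d} \rfloor} = \begin{cases} M(n) & \text{if } \gcd(m,n) >1, \\ 1 + M(n) & \text{if } \gcd(m,n)=1. \end{cases} \]
   Context: $\mu$ is the Möbius function and $M(n)=\sum_{d=1}^n\mu(d)$ is the Mertens function. $\lfloor x\rfloor$ is the floor of $x$. *)

(* Defs.v *)
From mathcomp Require Import all_boot all_order all_algebra.
Set Implicit Arguments. Unset Strict Implicit. Unset Printing Implicit Defensive.
Import Order.TTheory GRing.Theory Num.Theory.
Local Open Scope ring_scope.

Definition mobius (d : nat) : int :=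
  if [forall p : 'I_d.+1, prime p ==> ~~ (p * p %| d)%N]
  then (-1) ^+ size (primes d)
  else 0.

Definition mertens (n : nat) : int := \sum_(1 <= d < n.+1) mobius d.

(* Main.v *)
Require Import Defs.
From mathcomp Require Import all_boot all_order all_algebra.
From mathcomp Require Import zify ring lra.
Import Order.TTheory GRing.Theory Num.Theory.
Local Open Scope ring_scope.

Lemma sqfP d : (0 < d)%N ->
  reflect (forall q, prime q -> ~~ (q * q %| d)%N)
          [forall p : 'I_d.+1, prime p ==> ~~ (p * p %| d)%N].
Proof.
move=> d0; apply: (iffP forallP).
  move=> H q pq; apply/negP => qd.
  have q1 := prime_gt1 pq.
  have := dvdn_leq d0 qd => le.
  have qlt : (q < d.+1)%N by nia.
  by move: (H (Ordinal qlt)) => /implyP /(_ pq) /negP.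
by move=> H i; apply/implyP => /H.
Qed.

Lemma mobius_sqf d : (0 < d)%N -> (forall q, prime q -> ~~ (q * q %| d)%N) ->
  mobius d = (-1) ^+ size (primes d).
Proof. by move=> d0 H; rewrite /mobius; case: sqfP => // /(_ H). Qed.

Lemma mobius_nsqf d q : (0 < d)%N -> prime q -> (q * q %| d)%N -> mobius d = 0.
Proof.
move=> d0 pq qd; rewrite /mobius; case: sqfP => // H.
by move: (H q pq); rewrite qd.
Qed.

Lemma mobius_mulp p d : prime p -> (0 < d)%N -> ~~ (p %| d)%N ->
  mobius (p * d) = - mobius d.
Proof.
move=> pp d0 npd.
have p0 : (0 < p)%N by rewrite prime_gt0.
have pd0 : (0 < p * d)%N by rewrite muln_gt0 p0.
have key : forall q, prime q -> (q * q %| p * d)%N = (q * q %| d)%N.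
  move=> q pq; case: (eqVneq q p) => [->|qp].
    rewrite dvdn_pmul2l // (negbTE npd); apply/esym/negP => H.
    by move/negP: npd; apply; apply: dvdn_trans H; apply: dvdn_mulr.
  rewrite Gauss_dvdr // coprimeMl andbb prime_coprime //.
  by rewrite dvdn_prime2 // qp.
have hsz : size (primes (p * d)) = (size (primes d)).+1.
  have pnd : p \notin primes d by rewrite mem_primes pp d0 /=.
  have -> : (size (primes d)).+1 = size (p :: primes d) by [].
  apply: perm_size; apply: uniq_perm.
  - exact: primes_uniq.
  - by rewrite /= pnd primes_uniq.
  move=> q; rewrite primesM // primes_prime // in_cons.
  by rewrite in_cons in_nil orbF.
rewrite /mobius; case: sqfP => // H1; case: sqfP => // H2.
- by rewrite hsz exprS mulN1r.
- by exfalso; apply: H2 => q pq; rewrite -key //; apply: H1.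
- by exfalso; apply: H1 => q pq; rewrite key //; apply: H2.
Qed.

Lemma mobius_mulp2 p d : prime p -> (0 < d)%N -> (p %| d)%N -> mobius (p * d) = 0.
Proof.
move=> pp d0 pd; apply: (@mobius_nsqf _ p) => //.
  by rewrite muln_gt0 prime_gt0.
by rewrite dvdn_pmul2l ?prime_gt0.
Qed.

Lemma divisors_gt0 m e : (0 < m)%N -> e \in divisors m -> (0 < e)%N.
Proof.
move=> m0; rewrite -dvdn_divisors // => ed; case: e ed => // .
by rewrite dvd0n; move=> /eqP m00; rewrite m00 in m0.
Qed.

Lemma sum_div_mobius k : (0 < k)%N -> \sum_(d <- divisors k) mobius d = (k == 1)%:R.
Proof.
move=> k0; case: (ltngtP k 1) => [|k1|->]; first by rewrite ltnNge k0.
  idtac.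
  set p := pdiv k.
  have pp : prime p by apply: pdiv_prime.
  have p0 : (0 < p)%N by apply: prime_gt0.
  have pk : (p %| k)%N by apply: pdiv_dvd.
  have kp0 : (0 < k %/ p)%N by rewrite divn_gt0 // dvdn_leq.
  have kpE : (p * (k %/ p)%N = k)%N by rewrite mulnC divnK.
  rewrite (bigID (fun d => p %| d)%N) /=.
  have A : \sum_(d <- divisors k | (p %| d)%N) mobius d =
           - \sum_(e <- divisors (k %/ p)%N | ~~ (p %| e)%N) mobius e.
    rewrite -big_filter.
    have PE : perm_eq [seq d <- divisors k | (p %| d)%N] [seq (p * e)%N | e <- divisors (k %/ p)%N].
      apply: uniq_perm.
      - by apply: filter_uniq; apply: divisors_uniq.
      - rewrite map_inj_uniq ?divisors_uniq // => x y /eqP.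
        by rewrite eqn_pmul2l // => /eqP.
      move=> d; rewrite mem_filter -dvdn_divisors //; apply/andP/mapP.
        case=> pd dk; exists (d %/ p)%N; last by rewrite mulnC divnK.
        rewrite -dvdn_divisors // -(@dvdn_pmul2l p) // kpE.
        by rewrite mulnC divnK.
      case=> e; rewrite -dvdn_divisors // => ek ->; split.
        by apply: dvdn_mulr.
      by rewrite -kpE dvdn_pmul2l.
    rewrite (perm_big _ PE) big_map (bigID (fun e => p %| e)%N) /=.
    rewrite big1_seq ?add0r; last first.
      move=> e /andP [pe ed]; apply: mobius_mulp2 => //.
      exact: (divisors_gt0 _ _ kp0 ed).
    rewrite -sumrN big_seq_cond [in RHS]big_seq_cond; apply: eq_bigr.
    move=> e /andP [ed npe]; apply: mobius_mulp => //.
    exact: (divisors_gt0 _ _ kp0 ed).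
  have B : \sum_(d <- divisors k | ~~ (p %| d)%N) mobius d =
           \sum_(e <- divisors (k %/ p)%N | ~~ (p %| e)%N) mobius e.
    rewrite -big_filter -[in RHS]big_filter; apply: perm_big; apply: uniq_perm.
    - by apply: filter_uniq; apply: divisors_uniq.
    - by apply: filter_uniq; apply: divisors_uniq.
    move=> d; rewrite !mem_filter -!dvdn_divisors //.
    case pd: (p %| d)%N => //=.
    have cdp : coprime d p by rewrite coprime_sym prime_coprime // pd.
    by rewrite -{1}kpE mulnC Gauss_dvdl.
  by rewrite A B addNr.
have P1 : perm_eq (divisors 1) [:: 1%N].
  apply: uniq_perm; [exact: divisors_uniq | by [] |].
  by move=> d; rewrite -dvdn_divisors // dvdn1 mem_seq1.
rewrite (perm_big _ P1) big_seq1 mobius_sqf //.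
move=> q pq; rewrite dvdn1; have := prime_gt1 pq.
by case: q pq => [|[|q]] //.
Qed.

Lemma sum_range_div n k : (0 < k)%N -> (k <= n)%N ->
  \sum_(1 <= d < n.+1 | (d %| k)%N) mobius d = (k == 1)%:R.
Proof.
move=> k0 kn; rewrite -sum_div_mobius // -big_filter; apply: perm_big.
apply: uniq_perm; first by apply: filter_uniq; apply: iota_uniq.
  exact: divisors_uniq.
move=> d; rewrite mem_filter mem_index_iota -dvdn_divisors //.
case dk: (d %| k)%N; rewrite ?andbF //=.
have := dvdn_leq k0 dk; case: d dk => [|d] dk.
  by rewrite dvd0n in dk; move/eqP: dk => dk; rewrite dk in k0.
by move=> h; lia.
Qed.

Lemma divdiff n d : (0 < n)%N -> (0 < d)%N -> (n %/ d - (n - 1) %/ d)%N = (d %| n)%N :> nat.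
Proof.
case: n => // n _ d0; rewrite divnS // subn1 /= addnK //.
Qed.

Lemma sum_ind n k : (0 < k)%N -> (k <= n)%N ->
  \sum_(1 <= d < n.+1) mobius d * (d %| k)%N%:R = (k == 1)%:R.
Proof.
move=> k0 kn; rewrite -(sum_range_div n k k0 kn) [in RHS]big_mkcond /=.
by apply: eq_bigr => d _; case: (d %| k)%N; rewrite ?mulr1 ?mulr0.
Qed.

Theorem theorem4p1 (m n : nat) (hm : (1 < m)%N) (hmn : (m <= n)%N) :
  \sum_(1 <= d < n.+1)
     mobius d * 2 ^+ ((n %/ d - (n - 1) %/ d) + (m %/ d - (m - 1) %/ d))%N
  = (if (1 < gcdn m n)%N then mertens n else 1 + mertens n).
Proof.
have m0 : (0 < m)%N by lia.
have n0 : (0 < n)%N by lia.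
have g0 : (0 < gcdn m n)%N by rewrite gcdn_gt0 m0.
have gn : (gcdn m n <= n)%N by apply: dvdn_leq => //; apply: dvdn_gcdr.
rewrite big_nat_cond (eq_bigr (fun d => mobius d + mobius d * (d %| n)%N%:R
   + mobius d * (d %| m)%N%:R + mobius d * (d %| gcdn m n)%N%:R)); last first.
  move=> d /andP [/andP [d0 _] _].
  rewrite !divdiff // dvdn_gcd.
  by case: (d %| n)%N; case: (d %| m)%N => /=; rewrite ?expr0 ?expr1 ?expr2; ring.
rewrite -big_nat_cond !big_split /= !sum_ind //. 
rewrite -/(mertens n) (gtn_eqF hm) (gtn_eqF (leq_trans hm hmn)) !addr0.
have [g1|g1] : (1 < gcdn m n)%N \/ gcdn m n = 1%N by lia.
  by rewrite g1 (gtn_eqF g1) addr0.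
by rewrite g1 eqxx ltnn addrC.
Qed.
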